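(* Let $\{z_n\}_{n\ge 0}$ be a sequence of positive real numbers satisfying $az_{n+1}=bz_n+cz_{n-1}$ for $n\ge 1$, where $a,b,c$ are positive constants. If $z_0z_2\ge z_1^2$, then $\{z_{2n}\}_{n\ge 0}$ is log-convex and $\{z_{2n+1}\}_{n\ge 0}$ is log-concave. If $z_0z_2\le z_1^2$, then $\{z_{2n}\}_{n\ge 0}$ is log-concave and $\{z_{2n+1}\}_{n\ge 0}$ is log-convex.
   Context: A sequence $a_0,a_1,\ldots$ of nonnegative reals is log-convex (resp. log-concave) if $a_{k-1}a_{k+1}\ge a_k^2$ (resp. $\le$) for all $k\ge 1$. *)

(* Defs.v *)
From mathcomp Require Import all_boot all_order all_algebra.
From mathcomp Require Import reals.
Set Implicit Arguments. Unset Strict Implicit. Unset Printing Implicit Defensive.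
Import Order.TTheory GRing.Theory Num.Theory.
Local Open Scope ring_scope.

Definition log_convex (R : realType) (a : nat -> R) : Prop :=
  (forall k, 0 <= a k) /\ (forall k, (1 <= k)%N -> a k ^+ 2 <= a k.-1 * a k.+1).

Definition log_concave (R : realType) (a : nat -> R) : Prop :=
  (forall k, 0 <= a k) /\ (forall k, (1 <= k)%N -> a k.-1 * a k.+1 <= a k ^+ 2).

(* Main.v *)
Require Import Defs.
From mathcomp Require Import all_boot all_order all_algebra.
From mathcomp Require Import reals.
From mathcomp Require Import ring lra.
Import Order.TTheory GRing.Theory Num.Theory.
Local Open Scope ring_scope.

Theorem corollary3p17 (R : realType) (z : nat -> R) (a b c : R) :
  (forall n, 0 < z n) -> 0 < a -> 0 < b -> 0 < c ->
  (forall n, (1 <= n)%N -> a * z n.+1 = b * z n + c * z n.-1) ->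
  (z 1%N ^+ 2 <= z 0%N * z 2%N ->
     log_convex (fun n => z n.*2) /\ log_concave (fun n => z n.*2.+1)) /\
  (z 0%N * z 2%N <= z 1%N ^+ 2 ->
     log_concave (fun n => z n.*2) /\ log_convex (fun n => z n.*2.+1)).
Proof.
move=> zp ap bp cp rec.
have a0 : a != 0 by rewrite gt_eqF.
have ex m : z m.+2 = (b * z m.+1 + c * z m) / a.
  by rewrite -(rec m.+1 erefl) mulrC mulKf.
pose D m := z m * z m.+2 - z m.+1 ^+ 2.
have step m : a * D m.+1 = - c * D m.
  rewrite /D (ex m.+1) (ex m); by field.
have idX : forall m, z m * z m.+4 - z m.+2 ^+ 2 = (b / a) ^+ 2 * D m.
  move=> m; rewrite /D (ex m.+2) (ex m.+1) (ex m); by field.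
have s1 m : 0 <= D m -> D m.+1 <= 0.
  move=> h; have := step m; nra.
have s2 m : D m <= 0 -> 0 <= D m.+1.
  move=> h; have := step m; nra.
have sg j : (0 <= D 0%N -> 0 <= D j.*2 /\ D j.*2.+1 <= 0) /\
            (D 0%N <= 0 -> D j.*2 <= 0 /\ 0 <= D j.*2.+1).
  elim: j => [|j [IH1 IH2]].
    by split=> h; split=> //; [apply: s1|apply: s2].
  rewrite doubleS; split=> h.
    have [_ h2] := IH1 h; have h3 := s2 _ h2; split=> //; exact: s1.
  have [_ h2] := IH2 h; have h3 := s1 _ h2; split=> //; exact: s2.
have nn f : forall k : nat, 0 <= z (f k) by move=> k; exact: ltW.
have ge m : 0 <= D m -> z m.+2 ^+ 2 <= z m * z m.+4.
  by move=> h; rewrite -subr_ge0 idX; apply: mulr_ge0 => //; apply: sqr_ge0.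
have le m : D m <= 0 -> z m * z m.+4 <= z m.+2 ^+ 2.
  by move=> h; rewrite -subr_le0 idX; apply: mulr_ge0_le0 => //; apply: sqr_ge0.
have D0 : D 0%N = z 0%N * z 2%N - z 1%N ^+ 2 by [].
split=> h.
- have h' : 0 <= D 0%N by rewrite D0 subr_ge0.
  split; split=> // -[|k] // _; have [h1 h2] := (sg k).1 h'.
  + by rewrite /= !doubleS; apply: ge.
  + by rewrite /= !doubleS; apply: le.
- have h' : D 0%N <= 0 by rewrite D0 subr_le0.
  split; split=> // -[|k] // _; have [h1 h2] := (sg k).2 h'.
  + by rewrite /= !doubleS; apply: le.
  + by rewrite /= !doubleS; apply: ge.
Qed.
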